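(* In the setting described in the context, let $\sigma$ be a $\Sigma_m$-proximity on $A$. Then the function $$d(x,y)=\tfrac12\big(\sigma(x,x)+\sigma(y,y)\big)-\sigma(x,y)$$ is a metric on $A$ and belongs to $\mathcal{B}_2$.
   Context: $A$ is a nonempty set (possibly infinite); $m\in\mathbb{R}$. A metric on $A$ is a function $d:A^2\to\mathbb{R}$ such that for all $x,y,z\in A$: $d(x,y)=0$ iff $x=y$, and $d(x,y)+d(x,z)-d(y,z)\ge0$. $\mathcal{B}_1$ is a set of functions $A\to\mathbb{R}$ forming a real linear space containing all constant functions, and $\mu:\mathcal{B}_1\to\mathbb{R}$ is a linear functional with $\mu(c)=c$ for every constant function $c$ and monotone: if $f,g\in\mathcal{B}_1$ and $f\ge g$ pointwise, then $\mu(f)\ge\mu(g)$. For $f:A^2\to\mathbb{R}$ such that $y\mapsto f(x,y)$ lies in $\mathcal{B}_1$ for every $x$, write $f(x,\cdot)=\mu(y\mapsto f(x,y))$. $\mathcal{B}_2$ is a set of functions $A^2\to\mathbb{R}$ forming a real linear space that contains all constant functions and all functions $(x,y)\mapsto h(x)$ and $(x,y)\mapsto h(y)$ with $h\in\mathcal{B}_1$, and such that for every $f\in\mathcal{B}_2$: $y\mapsto f(x,y)\in\mathcal{B}_1$ for every $x$, $x\mapsto f(x,\cdot)\in\mathcal{B}_1$, and $x\mapsto f(x,x)\in\mathcal{B}_1$. A function $\sigma\in\mathcal{B}_2$ is a $\Sigma_m$-proximity on $A$ if for all $x,y,z\in A$: (1) $\sigma(x,\cdot)=m$; (2) $\sigma(x,y)+\sigma(x,z)-\sigma(y,z)\le\sigma(x,x)$,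 with strict inequality whenever $z=y$ and $x\ne y$. *)

(* Defs.v *)
From Stdlib Require Import Reals.
Open Scope R_scope.

Section Defs.
Variable A : Type.

Definition space1 (B1 : (A -> R) -> Prop) : Prop :=
  (forall c : R, B1 (fun _ => c)) /\
  (forall f g, B1 f -> B1 g -> B1 (fun x => f x + g x)) /\
  (forall (a : R) f, B1 f -> B1 (fun x => a * f x)).

(* mu : B1 -> R linear, normalized on constants, monotone.  mu is given as a
   total function (A -> R) -> R; only its values on B1 matter. *)
Definition mean (B1 : (A -> R) -> Prop) (mu : (A -> R) -> R) : Prop :=
  (forall f g, B1 f -> B1 g -> mu (fun x => f x + g x) = mu f + mu g) /\
  (forall (a : R) f, B1 f -> mu (fun x => a * f x) = a * mu f) /\
  (forall c : R, mu (fun _ => c) = c) /\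
  (forall f g, B1 f -> B1 g -> (forall x, f x >= g x) -> mu f >= mu g).

(* B2: linear space of functions A^2 -> R with the stated closure properties.
   f(x,.) := mu (fun y => f x y). *)
Definition space2 (B1 : (A -> R) -> Prop) (mu : (A -> R) -> R)
    (B2 : (A -> A -> R) -> Prop) : Prop :=
  (forall c : R, B2 (fun _ _ => c)) /\
  (forall f g, B2 f -> B2 g -> B2 (fun x y => f x y + g x y)) /\
  (forall (a : R) f, B2 f -> B2 (fun x y => a * f x y)) /\
  (forall h, B1 h -> B2 (fun x _ => h x)) /\
  (forall h, B1 h -> B2 (fun _ y => h y)) /\
  (forall f, B2 f ->
     (forall x, B1 (fun y => f x y)) /\
     B1 (fun x => mu (fun y => f x y)) /\
     B1 (fun x => f x x)).

Definition sigma_proximity (B2 : (A -> A -> R) -> Prop) (mu : (A -> R) -> R)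
    (m : R) (sigma : A -> A -> R) : Prop :=
  B2 sigma /\
  (forall x, mu (fun y => sigma x y) = m) /\
  (forall x y z, sigma x y + sigma x z - sigma y z <= sigma x x) /\
  (forall x y, x <> y -> sigma x y + sigma x y - sigma y y < sigma x x).

Definition is_metric (d : A -> A -> R) : Prop :=
  (forall x y, d x y = 0 <-> x = y) /\
  (forall x y z, d x y + d x z - d y z >= 0).

End Defs.

(* Main.v *)
Require Import Defs.
From Stdlib Require Import Reals Lra FunctionalExtensionality Classical.
Open Scope R_scope.

Theorem proposition3 (A : Type) (HA : inhabited A) (m : R)
    (B1 : (A -> R) -> Prop) (mu : (A -> R) -> R)
    (B2 : (A -> A -> R) -> Prop) (sigma : A -> A -> R) :
  space1 A B1 -> mean A B1 mu -> space2 A B1 mu B2 ->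
  sigma_proximity A B2 mu m sigma ->
  is_metric A (fun x y => (1/2) * (sigma x x + sigma y y) - sigma x y) /\
  B2 (fun x y => (1/2) * (sigma x x + sigma y y) - sigma x y).
Proof.
  intros _ _ [Hc [Hadd [Hsc [Hl [Hr Hcl]]]]] [Hs [_ [Htri Hstr]]].
  split.
  - split.
    + intros x y; split.
      * intros H. destruct (classic (x = y)) as [e|ne]; auto.
        exfalso. specialize (Hstr x y ne). lra.
      * intros ->. lra.
    + intros x y z. specialize (Htri x y z). lra.
  - destruct (Hcl sigma Hs) as [_ [_ Hd]].
    pose proof (Hl _ Hd) as H1. pose proof (Hr _ Hd) as H2.
    pose proof (Hsc (1/2) _ (Hadd _ _ H1 H2)) as H3.
    pose proof (Hadd _ _ H3 (Hsc (-1) _ Hs)) as H4.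
    simpl in H4.
    replace (fun x y => (1/2) * (sigma x x + sigma y y) - sigma x y)
      with (fun x y => 1 / 2 * (sigma x x + sigma y y) + -1 * sigma x y); auto.
    apply functional_extensionality; intro x.
    apply functional_extensionality; intro y. ring.
Qed.
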